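(* For any non-splitting CSS code, none of the gates $H$, $PH$, $HP$ (single-qubit) and $\mathsf{CNOT}$ (two-qubit) is $1$-local-Clifford partially addressable.
   Context: A CSS code $\mathsf{CSS}(A,B)$ on $n$ qubits is given by subspaces $A,B\subseteq\mathbb{F}_2^n$ with $a\cdot b=0$ for all $a\in A,b\in B$; its codespace is the common $+1$-eigenspace of all $X^a$ ($a\in A$) and $Z^b$ ($b\in B$), where $G^a=\bigotimes_{i:a_i=1}G_i$. A logical operator is a unitary preserving the codespace. A subspace $A\subseteq\mathbb{F}_2^n$ splits on a non-empty $h\subsetneq\{1,\dots,n\}$ if $A=A_1\oplus A_2$ with $A_1$ having support $h$ and $A_2$ supported on the complement of $h$; the code splits on $h$ if both $A$ and $B$ do, and is non-splitting if it splits on no such $h$. $P=\mathrm{diag}(1,i)$, $H$ is Hadamard. A $1$-local Clifford circuit is a tensor product of single-qubit Clifford gates. Fix logical Pauli operators $\bar X_j,\bar Z_j$ for the $k$ logical qubits; a logical operator $G$ has logical action $\bar W$ ($W=\sum_j\alpha_jW_j$ in the Pauli basis) if $G|\psi\rangle=\sum_j\alpha_j\bar W_j|\psi\rangle$ for all codestates. A $p$-qubit unitary $U$ is $1$-local-Clifford partially addressable on the code if there exist a set $I$ of pairwise disjoint ordered $p$-tuples of logical qubits, $I\neq\emptyset$ and not covering all logical qubits, and a $1$-local Clifford circuit that is a logical operator whose logical action is $\bar U$ on each tuple of $I$ (identity on the remaining logical qubits). *)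

(* Defs.v *)
(* Qubit states/operators are represented by kernels over
   computational-basis bit strings 'rV['F_2]_n, with complex amplitudes in algC. *)
From HB Require Import structures.
From mathcomp Require Import all_boot all_order all_algebra all_field.
Set Implicit Arguments. Unset Strict Implicit. Unset Printing Implicit Defensive.
Import GRing.Theory Num.Theory.
Local Open Scope ring_scope.

Notation bits n := 'rV['F_2]_n.

Definition dotF2 n (a b : bits n) : 'F_2 := (a *m b^T) 0 0.
Definition sgn2 (c : 'F_2) : algC := if c == 0 then 1 else -1.

Definition state n := bits n -> algC.
Definition op n := bits n -> bits n -> algC.

Definition opapp n (U : op n) (psi : state n) : state n :=
  fun x => \sum_y U x y * psi y.
Definition opmul n (U V : op n) : op n := fun x y => \sum_z U x z * V z y.
Definition opid n : op n := fun x y => (x == y)%:R.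
Definition adj n (U : op n) : op n := fun x y => (U y x)^*.
Definition unitary n (U : op n) : Prop :=
  forall x y, opmul U (adj U) x y = @opid n x y.

Definition Xop n (a : bits n) : op n := fun x y => (x == y + a)%:R.
Definition Zop n (b : bits n) : op n := fun x y => (x == y)%:R * sgn2 (dotF2 b y).
Definition XZ n (a b : bits n) : op n := opmul (Xop a) (Zop b).

Definition css_orth n (A B : {vspace bits n}) : Prop :=
  forall a b, a \in A -> b \in B -> dotF2 a b = 0.

Definition in_code n (A B : {vspace bits n}) (psi : state n) : Prop :=
  (forall a, a \in A -> forall x, opapp (Xop a) psi x = psi x) /\
  (forall b, b \in B -> forall x, opapp (Zop b) psi x = psi x).

Definition logical_op n (A B : {vspace bits n}) (G : op n) : Prop :=
  unitary G /\ forall psi, in_code A B psi -> in_code A B (opapp G psi).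

Definition supp_in n (h : {set 'I_n}) (v : bits n) : Prop :=
  forall i, i \notin h -> v 0 i = 0.
Definition vsplits n (A : {vspace bits n}) (h : {set 'I_n}) : Prop :=
  exists A1 A2 : {vspace bits n},
    [/\ (A1 + A2)%VS = A, directv (A1 + A2),
        (forall v, v \in A1 -> supp_in h v) &
        (forall v, v \in A2 -> supp_in (~: h) v)].
Definition code_splits n (A B : {vspace bits n}) (h : {set 'I_n}) : Prop :=
  vsplits A h /\ vsplits B h.
Definition nonsplitting n (A B : {vspace bits n}) : Prop :=
  forall h : {set 'I_n}, h != set0 -> h != setT -> ~ code_splits A B h.

Definition clifford1 (g : op 1) : Prop :=
  unitary g /\
  forall a b : bits 1, exists (c : algC) (a' b' : bits 1),
    forall x y, opmul (opmul g (XZ a b)) (adj g) x y = c * XZ a' b' x y.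

Definition tens n (g : 'I_n -> op 1) : op n :=
  fun x y => \prod_q g q (\row_(j < 1) x 0 q) (\row_(j < 1) y 0 q).

(* CSS-type logical Pauli operators: row j of LX (resp. LZ) is x_j (resp. z_j),
   with  Xbar_j = X^{x_j}, Zbar_j = Z^{z_j}. *)
Definition logical_paulis n k (A B : {vspace bits n}) (LX LZ : 'M['F_2]_(k, n)) : Prop :=
  [/\ (\dim A + \dim B + k)%N = n,
      LX *m LZ^T = 1%:M,
      (forall b, b \in B -> LX *m b^T = 0) &
      (forall a, a \in A -> LZ *m a^T = 0)].

Definition lbar n k (LX LZ : 'M['F_2]_(k, n)) (s t : bits k) : op n :=
  XZ (s *m LX) (t *m LZ).

Definition has_logical_action n k (A B : {vspace bits n}) (LX LZ : 'M['F_2]_(k, n))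
    (G : op n) (W : op k) : Prop :=
  exists alpha : bits k -> bits k -> algC,
    (forall x y, W x y = \sum_s \sum_t alpha s t * XZ s t x y) /\
    (forall psi, in_code A B psi ->
       forall x, opapp G psi x = \sum_s \sum_t alpha s t * opapp (lbar LX LZ s t) psi x).

Definition restr k p (tau : {ffun 'I_p -> 'I_k}) (x : bits k) : bits p :=
  \row_j x 0 (tau j).

(* U on each tuple of I, identity on the remaining logical qubits *)
Definition embed k p (I : {set {ffun 'I_p -> 'I_k}}) (U : op p) : op k :=
  fun x y =>
    (\prod_(tau in I) U (restr tau x) (restr tau y)) *
    \prod_(j : 'I_k | [forall tau in I, j \notin codom tau]) (x 0 j == y 0 j)%:R.

Definition valid_tuples k p (I : {set {ffun 'I_p -> 'I_k}}) : Prop :=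
  [/\ I != set0,
      (forall tau, tau \in I -> injective tau),
      (forall tau1 tau2, tau1 \in I -> tau2 \in I -> tau1 != tau2 ->
          [disjoint codom tau1 & codom tau2]) &
      (exists j : 'I_k, forall tau, tau \in I -> j \notin codom tau)].

Definition partially_addressable n k (A B : {vspace bits n})
    (LX LZ : 'M['F_2]_(k, n)) p (U : op p) : Prop :=
  exists I : {set {ffun 'I_p -> 'I_k}}, valid_tuples I /\
  exists g : 'I_n -> op 1,
    [/\ forall q, clifford1 (g q), logical_op A B (tens g) &
        has_logical_action A B LX LZ (tens g) (embed I U)].

Definition Hgate : op 1 := fun x y => sgn2 (dotF2 x y) / sqrtC 2.
Definition Pgate : op 1 :=
  fun x y => (x == y)%:R * (if x 0 0 == 0 then 1 else 'i).
Definition PHgate : op 1 := opmul Pgate Hgate.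
Definition HPgate : op 1 := opmul Hgate Pgate.
(* CNOT with control = first qubit of the tuple: |y0,y1> |-> |y0, y1+y0> *)
Definition CNOTgate : op 2 :=
  fun x y => (x == \row_(j < 2) (if j == ord0 then y 0 ord0 else y 0 ord_max + y 0 ord0))%:R.

(* Main.v *)
Require Import Defs.
From HB Require Import structures.
From mathcomp Require Import all_boot all_order all_algebra all_field.
From mathcomp Require Import zify ring.
Import GRing.Theory Num.Theory.
Local Open Scope ring_scope.

Module ProofDev.
Set Implicit Arguments. Unset Strict Implicit. Unset Printing Implicit Defensive.

Lemma F2_cases (c : 'F_2) : c = 0 \/ c = 1.
Proof.
case: c => m Hm.
have : (m < 2)%N by exact: Hm.
case: m Hm => [|[|m]] Hm // _; [left|right]; exact/val_inj.
Qed.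

Lemma F2_add_self (c : 'F_2) : c + c = 0.
Proof. by case: (F2_cases c) => ->; apply/eqP. Qed.

Lemma F2_opp (c : 'F_2) : - c = c.
Proof. by case: (F2_cases c) => ->; apply/eqP. Qed.

Lemma F2_mulcc (c : 'F_2) : c * c = c.
Proof. by case: (F2_cases c) => ->; apply/eqP. Qed.

Lemma one_neq0_F2 : (1 : 'F_2) != 0.
Proof. by []. Qed.

Lemma bits_opp n (u : bits n) : - u = u.
Proof. by apply/matrixP => i j; rewrite mxE F2_opp. Qed.

Lemma bits_add_self n (u : bits n) : u + u = 0.
Proof. by apply/matrixP => i j; rewrite !mxE F2_add_self. Qed.

Lemma bits_addK n (u v : bits n) : u + v + v = u.
Proof. by rewrite -addrA bits_add_self addr0. Qed.

Lemma bits_subE n (u v : bits n) : u - v = u + v.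
Proof. by rewrite bits_opp. Qed.

Lemma sum_F2 (V : nmodType) (F : 'F_2 -> V) : \sum_c F c = F 0 + F 1.
Proof.
rewrite (bigD1 0) //= (bigD1 1) //= big1 ?addr0 // => c /andP[c1 c0].
by case: (F2_cases c) c1 c0 => ->.
Qed.

Lemma sgn2_0 : sgn2 0 = 1. Proof. by []. Qed.
Lemma sgn2_1 : sgn2 1 = -1. Proof. by []. Qed.

Lemma sgn2D a b : sgn2 (a + b) = sgn2 a * sgn2 b.
Proof.
by case: (F2_cases a) => ->; case: (F2_cases b) => ->;
  rewrite /sgn2 /= ?mul1r ?mulr1 ?mulrNN ?mulr1.
Qed.

Lemma sgn2_sq a : sgn2 a * sgn2 a = 1.
Proof. by rewrite -sgn2D F2_add_self. Qed.

Lemma sgn2_neq0 a : sgn2 a != 0.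
Proof. by case: (F2_cases a) => ->; rewrite /sgn2 /= ?oppr_eq0 oner_eq0. Qed.

Lemma sgn2_eq1 a : sgn2 a = 1 -> a = 0.
Proof.
case: (F2_cases a) => -> // /eqP; rewrite /sgn2 /= eq_sym -addr_eq0.
by have -> : (1 + 1 : algC) = 2%:R by []; rewrite pnatr_eq0.
Qed.

Lemma sgn2_sum (I : finType) (P : pred I) (f : I -> 'F_2) :
  sgn2 (\sum_(i | P i) f i) = \prod_(i | P i) sgn2 (f i).
Proof. by apply: (big_morph sgn2 sgn2D sgn2_0). Qed.

Lemma dotE n (a b : bits n) : dotF2 a b = \sum_q a 0 q * b 0 q.
Proof. by rewrite /dotF2 mxE; apply: eq_bigr => q _; rewrite mxE. Qed.

Lemma dotC n (a b : bits n) : dotF2 a b = dotF2 b a.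
Proof. by rewrite !dotE; apply: eq_bigr => q _; rewrite mulrC. Qed.

Lemma dotDl n (a b c : bits n) : dotF2 (a + b) c = dotF2 a c + dotF2 b c.
Proof. by rewrite !dotE -big_split; apply: eq_bigr => q _; rewrite mxE mulrDl. Qed.

Lemma dotDr n (a b c : bits n) : dotF2 c (a + b) = dotF2 c a + dotF2 c b.
Proof. by rewrite dotC dotDl !(dotC c). Qed.

Lemma dot0l n (a : bits n) : dotF2 0 a = 0.
Proof. by rewrite dotE big1 // => q _; rewrite mxE mul0r. Qed.

Lemma dot0r n (a : bits n) : dotF2 a 0 = 0.
Proof. by rewrite dotC dot0l. Qed.

Definition b1 (c : 'F_2) : bits 1 := \row_(j < 1) c.

Lemma b1E (x : bits 1) : x = b1 (x 0 0).
Proof. by apply/matrixP => i j; rewrite !ord1 mxE. Qed.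

Lemma b1K c : b1 c 0 0 = c. Proof. by rewrite mxE. Qed.

Lemma b1D c c' : b1 (c + c') = b1 c + b1 c'.
Proof. by apply/matrixP => i j; rewrite !mxE. Qed.

Lemma dot1E (a b : bits 1) : dotF2 a b = a 0 0 * b 0 0.
Proof. by rewrite dotE big_ord1. Qed.

Lemma sum_bits1 (V : nmodType) (F : bits 1 -> V) : \sum_x F x = F (b1 0) + F (b1 1).
Proof.
rewrite -(sum_F2 (fun c => F (b1 c))) (reindex b1) //; exists (fun x : bits 1 => x 0 0) => x _.
  by rewrite b1K. by rewrite -b1E.
Qed.

Lemma sum_delta (T : finType) (V : pzRingType) (z : T) (f : T -> V) :
  \sum_y (y == z)%:R * f y = f z.
Proof.
rewrite (bigD1 z) //= eqxx mul1r big1 ?addr0 // => y /negbTE ->.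
by rewrite mul0r.
Qed.

Lemma sum_delta' (T : finType) (V : pzRingType) (z : T) (f : T -> V) :
  \sum_y (z == y)%:R * f y = f z.
Proof. by rewrite -(sum_delta z f); apply: eq_bigr => y _; rewrite eq_sym. Qed.

Lemma sum_shift n (V : nmodType) (u : bits n) (f : bits n -> V) :
  \sum_y f (y + u) = \sum_y f y.
Proof.
rewrite (reindex (fun y => y + u)) /=; last first.
  by exists (fun y => y + u) => y _; rewrite bits_addK.
by apply: eq_bigr => y _; rewrite bits_addK.
Qed.

Lemma flip (T : finType) (U V : T -> T -> algC) :
  (forall x y, \sum_z U x z * V z y = (x == y)%:R) ->
  forall x y, \sum_z V x z * U z y = (x == y)%:R.
Proof.
move=> H.
pose MU := \matrix_(i < #|T|, j < #|T|) U (enum_val i) (enum_val j).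
pose MV := \matrix_(i < #|T|, j < #|T|) V (enum_val i) (enum_val j).
have sumE (F : T -> algC) : \sum_z F z = \sum_(l < #|T|) F (enum_val l).
  rewrite (reindex (@enum_val T T)) //; case: (enum_val_bij T) => g h1 h2; by exists g.
have HUV : MU *m MV = 1%:M.
  apply/matrixP => i j; rewrite !mxE.
  transitivity (\sum_z U (enum_val i) z * V z (enum_val j)).
    by rewrite sumE; apply: eq_bigr => l _; rewrite !mxE.
  by rewrite H (inj_eq enum_val_inj).
have HVU := mulmx1C HUV.
move=> x y.
move/matrixP/(_ (enum_rank x) (enum_rank y)): HVU.
rewrite !mxE (inj_eq enum_rank_inj) => <-.
rewrite sumE; apply: eq_bigr => l _; rewrite !mxE !enum_rankK.
done.
Qed.

Lemma unitary_adj n (U : op n) : unitary U -> forall x y, opmul (adj U) U x y = opid x y.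
Proof.
move=> HU; rewrite /opmul /opid; apply: flip => x y; exact: HU.
Qed.

Definition pa n (u v : bits n) (psi : state n) : state n :=
  fun x => sgn2 (dotF2 v (x + u)) * psi (x + u).

Lemma XZE n (a b : bits n) x y : XZ a b x y = (x == y + a)%:R * sgn2 (dotF2 b y).
Proof.
rewrite /XZ /opmul /Xop /Zop.
rewrite (bigD1 y) //= big1 ?addr0; first by rewrite eqxx mul1r.
by move=> z /negbTE zy; rewrite zy mul0r mulr0.
Qed.

Lemma opapp_XZ n (a b : bits n) psi x : opapp (XZ a b) psi x = pa a b psi x.
Proof.
rewrite /opapp /pa.
rewrite (bigD1 (x + a)) //= big1 ?addr0.
  by rewrite XZE bits_addK eqxx mul1r.
move=> y yx; rewrite XZE.
have -> : (x == y + a) = false.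
  apply/negbTE; apply: contra yx => /eqP ->; by rewrite bits_addK.
by rewrite !mul0r.
Qed.

Lemma opapp_X n (a : bits n) psi x : opapp (Xop a) psi x = psi (x + a).
Proof.
rewrite /opapp /Xop (bigD1 (x + a)) //= big1 ?addr0.
  by rewrite bits_addK eqxx mul1r.
move=> y yx.
have -> : (x == y + a) = false.
  apply/negbTE; apply: contra yx => /eqP ->; by rewrite bits_addK.
by rewrite !mul0r.
Qed.

Lemma opapp_Z n (b : bits n) psi x : opapp (Zop b) psi x = sgn2 (dotF2 b x) * psi x.
Proof.
rewrite /opapp /Zop (bigD1 x) //= big1 ?addr0.
  by rewrite eqxx mul1r.
by move=> y /negbTE yx; rewrite eq_sym yx !mul0r.
Qed.

Lemma pa00 n (psi : state n) x : pa 0 0 psi x = psi x.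
Proof. by rewrite /pa addr0 dot0l mul1r. Qed.

Lemma pa_sum n (I : finType) (u v : bits n) (c : I -> algC) (f : I -> state n) x :
  pa u v (fun y => \sum_i c i * f i y) x = \sum_i c i * pa u v (f i) x.
Proof.
rewrite /pa mulr_sumr; apply: eq_bigr => i _; by rewrite mulrCA.
Qed.

Lemma pa_comp n (u1 v1 u2 v2 : bits n) (psi : state n) x :
  pa u1 v1 (pa u2 v2 psi) x = sgn2 (dotF2 v1 u2) * pa (u1 + u2) (v1 + v2) psi x.
Proof.
rewrite /pa addrA; set y := x + u1 + u2.
have -> : x + u1 = y + u2 by rewrite /y bits_addK.
rewrite dotDl dotDr !sgn2D.
by rewrite !mulrA; congr (_ * _); rewrite [sgn2 (dotF2 v1 y) * _]mulrC.
Qed.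

Lemma memvDr n (A : {vspace bits n}) (x a : bits n) : a \in A -> (x + a \in A) = (x \in A).
Proof.
move=> aA; apply/idP/idP => H.
  by rewrite -(bits_addK x a) memvD.
by rewrite memvD.
Qed.

Definition ip n (f g : state n) : algC := \sum_x (f x)^* * g x.

Lemma ip_lin n (I J : finType) (c : I -> algC) (f : I -> state n) (d : J -> algC) (g : J -> state n) :
  ip (fun x => \sum_i c i * f i x) (fun x => \sum_j d j * g j x) =
  \sum_i \sum_j (c i)^* * d j * ip (f i) (g j).
Proof.
rewrite /ip.
transitivity (\sum_x \sum_i \sum_j (c i)^* * d j * ((f i x)^* * g j x)).
  apply: eq_bigr => x _; rewrite rmorph_sum mulr_suml; apply: eq_bigr => i _.
  rewrite mulr_sumr; apply: eq_bigr => j _; rewrite rmorphM.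
  by rewrite mulrACA [_ * d j]mulrC -!mulrA.
rewrite exchange_big; apply: eq_bigr => i _.
rewrite exchange_big; apply: eq_bigr => j _.
by rewrite mulr_sumr.
Qed.

Lemma ip_unitary n (G : op n) (f g : state n) : unitary G ->
  ip (opapp G f) (opapp G g) = ip f g.
Proof.
move=> HG; have HG' := unitary_adj HG.
rewrite /opapp /ip.
transitivity (\sum_x \sum_y \sum_z ((G x y)^* * G x z) * ((f y)^* * g z)).
  apply: eq_bigr => x _; rewrite rmorph_sum mulr_suml; apply: eq_bigr => y _.
  rewrite mulr_sumr; apply: eq_bigr => z _; rewrite rmorphM.
  by rewrite mulrACA.
rewrite exchange_big; apply: eq_bigr => y _.
rewrite exchange_big /=.
transitivity (\sum_z opid y z * ((f y)^* * g z)).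
  apply: eq_bigr => z _; rewrite -HG' /opmul /adj mulr_suml; done.
by rewrite /opid sum_delta'.
Qed.

Section Code.
Variables (n k : nat) (A B : {vspace bits n}) (LX LZ : 'M['F_2]_(k, n)).
Hypothesis orthAB : css_orth A B.
Hypothesis HL : logical_paulis A B LX LZ.

Definition psi (s : bits k) : state n := fun x => ((x + s *m LX) \in A)%:R.

Lemma LXLZ : LX *m LZ^T = 1%:M.
Proof. by case: HL. Qed.

Lemma LZLX : LZ *m LX^T = 1%:M.
Proof. by rewrite -[LZ]trmxK -trmx_mul LXLZ trmx1. Qed.

Lemma dot_LZ_LX (t s : bits k) : dotF2 (t *m LZ) (s *m LX) = dotF2 t s.
Proof. by rewrite /dotF2 trmx_mul mulmxA -(mulmxA t) LZLX mulmx1. Qed.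

Lemma dot_LZ_A (t : bits k) a : a \in A -> dotF2 (t *m LZ) a = 0.
Proof.
case: HL => _ _ _ H4 aA.
by rewrite /dotF2 -mulmxA H4 // mulmx0 mxE.
Qed.

Lemma dot_LX_B (s : bits k) b : b \in B -> dotF2 (s *m LX) b = 0.
Proof.
case: HL => _ _ H3 _ bB.
by rewrite /dotF2 -mulmxA H3 // mulmx0 mxE.
Qed.

Lemma dot_BA a b : a \in A -> b \in B -> dotF2 b a = 0.
Proof. by move=> aA bB; rewrite dotC orthAB. Qed.

Lemma LX_A_inj (w : bits k) : w *m LX \in A -> w = 0.
Proof.
case: HL => _ _ _ H4 /H4 H.
have := congr1 trmx H; rewrite trmx_mul trmxK trmx0 => H'.
by rewrite -mulmxA LXLZ mulmx1 in H'.
Qed.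

Lemma psi_code s : in_code A B (psi s).
Proof.
split=> [a aA x | b bB x].
  by rewrite opapp_X /psi -addrA [a + _]addrC addrA (memvDr _ aA).
rewrite opapp_Z /psi.
case xA: (x + s *m LX \in A); last by rewrite mulr0.
have -> : x = (x + s *m LX) + s *m LX by rewrite bits_addK.
by rewrite dotDr (dot_BA xA bB) dotC (dot_LX_B _ bB) addr0 mulr1.
Qed.

Lemma pa_psi (w t s : bits k) x :
  pa (w *m LX) (t *m LZ) (psi s) x = sgn2 (dotF2 t s) * psi (s + w) x.
Proof.
rewrite /pa /psi mulmxDl [s *m LX + _]addrC addrA.
case xA: (x + w *m LX + s *m LX \in A); last by rewrite !mulr0.
congr (sgn2 _ * _).
have -> : x + w *m LX = (x + w *m LX + s *m LX) + s *m LX by rewrite bits_addK.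
by rewrite dotDr dot_LZ_A // add0r dot_LZ_LX.
Qed.

Lemma pa_psiX (w s : bits k) x : pa (w *m LX) 0 (psi s) x = psi (s + w) x.
Proof. by rewrite -(mul0mx _ LZ) pa_psi dot0l mul1r. Qed.

Lemma pa_psiZ (t s : bits k) x : pa 0 (t *m LZ) (psi s) x = sgn2 (dotF2 t s) * psi s x.
Proof. by rewrite -(mul0mx _ LX) pa_psi addr0. Qed.

Lemma psi_disj s t x : psi s x * psi t x = (s == t)%:R * psi s x.
Proof.
rewrite /psi.
case: eqP => [-> | st]; first by rewrite -natrM mulnb andbb mul1r.
case xs: (x + s *m LX \in A); case xt: (x + t *m LX \in A); rewrite ?mulr0 ?mul0r //.
exfalso; apply: st.
have : (x + s *m LX) + (x + t *m LX) \in A by rewrite memvD.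
rewrite addrC -addrA [t *m LX + _]addrC !addrA bits_add_self add0r -mulmxDl.
by move/LX_A_inj => H; apply/eqP; rewrite -subr_eq0 bits_subE H.
Qed.

Lemma psi_conj s x : (psi s x)^* = psi s x.
Proof. by rewrite conjC_nat. Qed.

Definition Nc := \sum_x psi 0 x.

Lemma psi_sum s : \sum_x psi s x = Nc.
Proof.
rewrite /Nc -(sum_shift (s *m LX)); apply: eq_bigr => x _.
by rewrite /psi mul0mx addr0 bits_addK.
Qed.

Lemma ip_psi s t : ip (psi s) (psi t) = (s == t)%:R * Nc.
Proof.
rewrite /ip -(psi_sum s) mulr_sumr; apply: eq_bigr => x _.
by rewrite psi_conj psi_disj.
Qed.

Lemma Nc_neq0 : Nc != 0.
Proof.
rewrite /Nc /psi.
rewrite -natr_sum pnatr_eq0 (bigD1 0) //= mul0mx addr0 mem0v.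
by [].
Qed.

Lemma logical_basis (G : op n) (W : op k) :
  has_logical_action A B LX LZ G W ->
  forall s x, opapp G (psi s) x = \sum_s' W s' s * psi s' x.
Proof.
case=> alpha [HW HG] s x.
rewrite (HG _ (psi_code s)).
transitivity (\sum_a \sum_b alpha a b * (sgn2 (dotF2 b s) * psi (s + a) x)).
  apply: eq_bigr => a _; apply: eq_bigr => b _.
  by rewrite /lbar opapp_XZ pa_psi.
symmetry.
transitivity (\sum_s' \sum_a \sum_b alpha a b * XZ a b s' s * psi s' x).
  apply: eq_bigr => s' _; rewrite HW mulr_suml; apply: eq_bigr => a _.
  by rewrite mulr_suml.
rewrite exchange_big; apply: eq_bigr => a _.
rewrite exchange_big; apply: eq_bigr => b _.
transitivity (\sum_s' (s' == s + a)%:R * (alpha a b * sgn2 (dotF2 b s) * psi s' x)).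
  apply: eq_bigr => s' _; rewrite XZE.
  by rewrite mulrA [alpha a b * _]mulrC -!mulrA.
by rewrite sum_delta mulrA.
Qed.

Section Logical.
Variables (G : op n) (W : op k).
Hypothesis HGu : unitary G.
Hypothesis HGW : has_logical_action A B LX LZ G W.

Definition phi s : state n := opapp G (psi s).

Lemma W_adjW s t : opmul (adj W) W s t = opid s t.
Proof.
have H := ip_unitary (psi s) (psi t) HGu.
rewrite ip_psi in H.
have E : forall s, ip (opapp G (psi s)) (opapp G (psi t)) =
   ip (fun x => \sum_s' W s' s * psi s' x) (fun x => \sum_s' W s' t * psi s' x).
  by move=> s0; rewrite /ip; apply: eq_bigr => x _; rewrite !(logical_basis HGW).
rewrite E ip_lin in H.
have H2 : \sum_i \sum_j (W i s)^* * W j t * ip (psi i) (psi j) =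
          Nc * opmul (adj W) W s t.
  rewrite /opmul /adj mulr_sumr; apply: eq_bigr => i _.
  rewrite (bigD1 i) //= big1 ?addr0.
    by rewrite ip_psi eqxx mul1r mulrC.
  by move=> j /negbTE ji; rewrite ip_psi eq_sym ji mul0r mulr0.
rewrite H2 in H.
apply: (mulfI Nc_neq0); rewrite H /opid mulrC; done.
Qed.

End Logical.
End Code.

Definition basis_mx n (U : {vspace bits n}) : 'M['F_2]_(\dim U, n) :=
  \matrix_(i < \dim U) (vbasis U)`_i.

Lemma row_free_inj0 m n (M : 'M['F_2]_(m, n)) :
  (forall r : 'rV_m, r *m M = 0 -> r = 0) -> row_free M.
Proof.
move=> H; rewrite -kermx_eq0; apply/eqP/row_matrixP => i.
by rewrite row0; apply: H; rewrite -row_mul mulmx_ker row0.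
Qed.

Lemma basis_mx_mulE n (U : {vspace bits n}) (r : 'rV_(\dim U)) :
  r *m basis_mx U = \sum_i r 0 i *: (vbasis U)`_i.
Proof. by rewrite mulmx_sum_row; apply: eq_bigr => i _; rewrite rowK. Qed.

Lemma basis_mx_free n (U : {vspace bits n}) : row_free (basis_mx U).
Proof.
apply: row_free_inj0 => r; rewrite basis_mx_mulE => H.
have Hf := basis_free (vbasisP U).
apply/rowP => i; rewrite mxE.
exact: (freeP Hf (fun i => r 0 i) H).
Qed.

Lemma basis_mx_rank n (U : {vspace bits n}) : \rank (basis_mx U) = \dim U.
Proof. by apply/eqP; exact: basis_mx_free. Qed.

Lemma mem_basis_mx n (U : {vspace bits n}) (r : 'rV_(\dim U)) : r *m basis_mx U \in U.
Proof.
rewrite basis_mx_mulE; apply: memv_suml => i _; apply: memvZ.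
by apply: vbasis_mem; apply: mem_nth; rewrite size_tuple ltn_ord.
Qed.

Lemma basis_mx_mem n (U : {vspace bits n}) (i : 'I_(\dim U)) : (vbasis U)`_i \in U.
Proof. by apply: vbasis_mem; apply: mem_nth; rewrite size_tuple ltn_ord. Qed.

Section Dim.
Variables (n k : nat) (A B : {vspace bits n}) (LX LZ : 'M['F_2]_(k, n)).
Hypothesis orthAB : css_orth A B.
Hypothesis HL : logical_paulis A B LX LZ.

Lemma perpB (v : bits n) :
  (forall a, a \in A -> dotF2 v a = 0) ->
  (forall s : bits k, dotF2 v (s *m LX) = 0) -> v \in B.
Proof.
move=> HA HX.
case: HL => Hdim HXZ HXB HZA.
pose MA := basis_mx A; pose MB := basis_mx B.
pose M := col_mx MA LX.
have MALZ : MA *m LZ^T = 0.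
  apply/row_matrixP => i; rewrite row_mul rowK row0.
  have := HZA _ (basis_mx_mem i) => /(congr1 trmx).
  by rewrite trmx_mul trmxK trmx0.
have freeM : row_free M.
  apply: row_free_inj0 => r.
  rewrite -[r]hsubmxK mul_row_col => H.
  have H2 := congr1 (fun X => X *m LZ^T) H; rewrite /= mulmxDl -!mulmxA MALZ HXZ in H2.
  rewrite mulmx0 mulmx1 add0r mul0mx in H2.
  rewrite H2 mul0mx addr0 in H.
  have H1 : lsubmx r = 0.
    move: H; rewrite basis_mx_mulE => H.
    have H' := freeP (basis_free (vbasisP A)) (fun i => lsubmx r 0 i) H.
    apply/rowP => i; have /= -> := H' i; by rewrite mxE.
  by rewrite H1 H2 row_mx0.
have rkM : \rank M = (\dim A + k)%N by apply/eqP.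
pose K := kermx M^T.
have rkK : \rank K = \dim B.
  rewrite mxrank_ker mxrank_tr rkM.
  have e : (n - (\dim A + k) = \dim B)%N by lia.
  exact: e.
have MBK : (MB <= K)%MS.
  apply/sub_kermxP; rewrite tr_col_mx mul_mx_row.
  have -> : MB *m MA^T = 0.
    apply/matrixP => i j; rewrite !mxE.
    transitivity (dotF2 (vbasis B)`_i (vbasis A)`_j).
      by rewrite dotE; apply: eq_bigr => l _; rewrite !mxE.
    by rewrite dotC orthAB ?basis_mx_mem.
  have -> : MB *m LX^T = 0.
    apply/matrixP => i j; rewrite !mxE.
    transitivity ((LX *m ((vbasis B)`_i)^T) j 0); last first.
      by rewrite HXB ?basis_mx_mem // mxE.
    by rewrite mxE; apply: eq_bigr => l _; rewrite !mxE mulrC.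
  by rewrite row_mx0.
have KMB : (K <= MB)%MS.
  by rewrite -(mxrank_leqif_sup MBK).2 rkK basis_mx_rank.
have vK : (v <= K)%MS.
  apply/sub_kermxP; rewrite tr_col_mx mul_mx_row.
  have -> : v *m MA^T = 0.
    apply/rowP => j; rewrite !mxE.
    transitivity (dotF2 v (vbasis A)`_j).
      by rewrite dotE; apply: eq_bigr => l _; rewrite !mxE.
    by rewrite HA ?basis_mx_mem.
  have -> : v *m LX^T = 0.
    apply/rowP => j; rewrite !mxE.
    transitivity (dotF2 v ('e_j *m LX)).
      by rewrite dotE; apply: eq_bigr => l _; rewrite -rowE !mxE.
    by rewrite HX.
  by rewrite row_mx0.
have /submxP [D ->] := submx_trans vK KMB.
exact: mem_basis_mx.
Qed.
End Dim.

Lemma sgn_cancel (C : algC) p q : C * sgn2 (p + q) = 1 -> C * sgn2 q = 1 -> p = 0.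
Proof.
move=> H1 H2; apply: sgn2_eq1.
by rewrite sgn2D mulrCA H2 mulr1 in H1.
Qed.

Section Code2.
Variables (n k : nat) (A B : {vspace bits n}) (LX LZ : 'M['F_2]_(k, n)).
Hypothesis orthAB : css_orth A B.
Hypothesis HL : logical_paulis A B LX LZ.

Local Notation psi := (psi A LX).

Lemma pauli_scalar_psi (C : algC) u v :
  (forall s x, C * pa u v (psi s) x = psi s x) -> u \in A /\ v \in B.
Proof.
move=> H.
have uA : u \in A.
  have := H 0 0; rewrite /pa /psi mul0mx !addr0 add0r mem0v.
  by case: (u \in A) => //; rewrite !mulr0 => /eqP; rewrite eq_sym oner_eq0.
have key s x : psi s x = 1 -> C * sgn2 (dotF2 v (x + u)) = 1.
  move=> Hx; have := H s x; rewrite /pa /psi -addrA [u + _]addrC addrA (memvDr _ uA).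
  by rewrite -/(psi s x) Hx mulr1.
have k0 : C * sgn2 (dotF2 v u) = 1.
  by have := key 0 0; rewrite add0r; apply; rewrite /psi mul0mx addr0 mem0v.
split=> //.
apply: (perpB orthAB HL).
  move=> a aA; apply: (sgn_cancel _ k0); rewrite -dotDr.
  by apply: (key 0); rewrite /psi mul0mx addr0 aA.
move=> s; apply: (sgn_cancel _ k0); rewrite -dotDr.
by apply: (key s); rewrite /psi bits_add_self mem0v.
Qed.

Section Logical2.
Variables (G : op n) (W : op k).
Hypothesis HGu : unitary G.
Hypothesis HGW : has_logical_action A B LX LZ G W.

Local Notation phi s := (opapp G (psi s)).

Lemma W_W_adj s t : opmul W (adj W) s t = opid s t.
Proof.
rewrite /opmul /opid; apply: flip => x y.
exact: (W_adjW orthAB HL HGu HGW).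
Qed.

Lemma span s' x : psi s' x = \sum_s (W s' s)^* * phi s x.
Proof.
transitivity (\sum_t opid t s' * psi t x).
  by rewrite /opid sum_delta.
transitivity (\sum_s \sum_t (W s' s)^* * W t s * psi t x).
  rewrite exchange_big; apply: eq_bigr => t _.
  rewrite -W_W_adj /opmul /adj mulr_suml; apply: eq_bigr => s _.
  by rewrite [W t s * _]mulrC.
apply: eq_bigr => s _.
rewrite (logical_basis orthAB HL HGW) mulr_sumr; apply: eq_bigr => t _.
by rewrite mulrA.
Qed.

Lemma pauli_scalar_phi (C : algC) u v :
  (forall s x, C * pa u v (phi s) x = phi s x) -> u \in A /\ v \in B.
Proof.
move=> H; apply: (pauli_scalar_psi (C := C)) => s' x.
rewrite [RHS]span /pa span !mulr_sumr; apply: eq_bigr => s _.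
rewrite -(H s x) /pa; ring.
Qed.


Lemma combine (C : algC) u' v' u'' v'' :
  (forall s x, C * pa u' v' (phi s) x = pa u'' v'' (phi s) x) ->
  (u'' + u') \in A /\ (v'' + v') \in B.
Proof.
move=> Hc.
set w := u'' + u'.
apply: (pauli_scalar_phi (C := C * sgn2 (dotF2 v'' w))) => s x.
have := Hc s (x + u''); rewrite /pa.
rewrite -!addrA bits_add_self addr0 -/w.
set X := phi s x; set Y := phi s (x + w).
set b := sgn2 (dotF2 v' (x + w)); set c := sgn2 (dotF2 v'' w).
set d := sgn2 (dotF2 v'' (x + w)).
have ad : sgn2 (dotF2 v'' x) = d * c.
  by rewrite /d /c -sgn2D -dotDr -addrA bits_add_self addr0.
rewrite ad => Hc'.
rewrite dotDl sgn2D -/b -/d.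
transitivity (c * d * (C * (b * Y))); first by ring.
rewrite Hc'.
transitivity ((c * c) * (d * d) * X); first by ring.
by rewrite /c /d !sgn2_sq !mul1r.
Qed.


Lemma transport_W (dx dz dx' dz' : bits k) :
  (forall s s', sgn2 (dotF2 dz s) * W s' (s + dx) =
                sgn2 (dotF2 dz' (s' + dx')) * W (s' + dx') s) ->
  forall s x, opapp G (pa (dx *m LX) (dz *m LZ) (psi s)) x =
              pa (dx' *m LX) (dz' *m LZ) (phi s) x.
Proof.
move=> HW s x.
transitivity (sgn2 (dotF2 dz s) * phi (s + dx) x).
  rewrite /opapp mulr_sumr; apply: eq_bigr => y _.
  by rewrite (pa_psi HL) mulrCA.
rewrite (logical_basis orthAB HL HGW) mulr_sumr.
transitivity (\sum_t W t s * pa (dx' *m LX) (dz' *m LZ) (psi t) x); last first.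
  rewrite /pa (logical_basis orthAB HL HGW) mulr_sumr; apply: eq_bigr => t _.
  by rewrite mulrCA.
under [RHS]eq_bigr => t _ do rewrite (pa_psi HL).
rewrite -(sum_shift dx'); apply: eq_bigr => s' _.
rewrite mulrA HW bits_addK.
by rewrite mulrCA mulrA.
Qed.

End Logical2.
End Code2.

Lemma mulXZ_r n (g : op n) a b x y :
  \sum_z g x z * XZ a b z y = g x (y + a) * sgn2 (dotF2 b y).
Proof.
rewrite (bigD1 (y + a)) //= big1 ?addr0.
  by rewrite XZE eqxx mul1r.
move=> z za; rewrite XZE (negbTE za) mul0r mulr0.
by [].
Qed.

Lemma mulXZ_l n (g : op n) a b x y :
  \sum_w XZ a b x w * g w y = sgn2 (dotF2 b (x + a)) * g (x + a) y.
Proof.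
rewrite (bigD1 (x + a)) //= big1 ?addr0.
  by rewrite XZE bits_addK eqxx mul1r.
move=> w wa; rewrite XZE.
have -> : (x == w + a) = false.
  by apply/negbTE; apply: contra wa => /eqP ->; rewrite bits_addK.
by rewrite !mul0r.
Qed.

Lemma opmulA n (U V W : op n) x y :
  opmul (opmul U V) W x y = opmul U (opmul V W) x y.
Proof.
rewrite /opmul.
transitivity (\sum_z \sum_w U x w * V w z * W z y).
  by apply: eq_bigr => z _; rewrite mulr_suml.
rewrite exchange_big; apply: eq_bigr => w _.
by rewrite mulr_sumr; apply: eq_bigr => z _; rewrite mulrA.
Qed.

Lemma opmul_idr n (U V : op n) x y : (forall z w, V z w = opid z w) -> opmul U V x y = U x y.
Proof.
move=> HV; rewrite /opmul (bigD1 y) //= HV /opid eqxx mulr1 big1 ?addr0 // => z zy.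
by rewrite HV /opid (negbTE zy) mulr0.
Qed.

Lemma cliff_cov_gen n (g : op n) : unitary g ->
  forall a b c a' b', (forall x y, opmul (opmul g (XZ a b)) (adj g) x y = c * XZ a' b' x y) ->
  forall x y, g x (y + a) * sgn2 (dotF2 b y) = c * sgn2 (dotF2 b' (x + a')) * g (x + a') y.
Proof.
move=> Hu a b c a' b' H x y.
have Hu' := unitary_adj Hu.
transitivity (opmul (opmul (opmul g (XZ a b)) (adj g)) g x y); last first.
  rewrite /opmul.
  under eq_bigr => w _ do rewrite -/(opmul (opmul g (XZ a b)) (adj g) x w) H.
  by rewrite -mulrA -mulXZ_l mulr_sumr; apply: eq_bigr => w _; rewrite mulrA.
rewrite [RHS]opmulA opmul_idr // /opmul mulXZ_r //.
Qed.


Lemma cliff_cov (g : op 1) : clifford1 g ->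
  forall a b, exists c a' b', forall x y,
    g x (y + a) * sgn2 (dotF2 b y) = c * sgn2 (dotF2 b' (x + a')) * g (x + a') y.
Proof.
case=> Hu H a b; have [c [a' [b' Hc]]] := H a b.
by exists c, a', b'; apply: cliff_cov_gen.
Qed.

Definition rowq n (x : bits n) (q : 'I_n) : bits 1 := \row_(j < 1) x 0 q.

Lemma rowqD n (x y : bits n) q : rowq (x + y) q = rowq x q + rowq y q.
Proof. by apply/matrixP => i j; rewrite !mxE. Qed.

Lemma rowq_row n (a : 'I_n -> 'F_2) q : rowq (\row_q a q) q = b1 (a q).
Proof. by apply/matrixP => i j; rewrite !mxE. Qed.

Lemma dot_rowq n (b : bits n) y : dotF2 b y = \sum_q dotF2 (rowq b q) (rowq y q).
Proof. by rewrite dotE; apply: eq_bigr => q _; rewrite dot1E !mxE. Qed.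

Lemma tens_cov n (g : 'I_n -> op 1) (a b a' b' : 'I_n -> 'F_2) (c : 'I_n -> algC) :
  (forall q x y, g q x (y + b1 (a q)) * sgn2 (dotF2 (b1 (b q)) y) =
     c q * sgn2 (dotF2 (b1 (b' q)) (x + b1 (a' q))) * g q (x + b1 (a' q)) y) ->
  forall x y, tens g x (y + \row_q a q) * sgn2 (dotF2 (\row_q b q) y) =
    (\prod_q c q) * sgn2 (dotF2 (\row_q b' q) (x + \row_q a' q)) * tens g (x + \row_q a' q) y.
Proof.
move=> H x y.
rewrite /tens !dot_rowq !sgn2_sum -big_split -!big_split /=.
apply: eq_bigr => q _.
rewrite -[\row__ x 0 q]/(rowq x q) -[\row__ y 0 q]/(rowq y q).
rewrite -[\row__ (y + _) 0 q]/(rowq (y + \row_q a q) q).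
rewrite -[\row__ (x + _) 0 q]/(rowq (x + \row_q a' q) q).
by rewrite !rowqD !rowq_row H.
Qed.

Lemma b1_0 : b1 0 = 0.
Proof. by apply/matrixP => i j; rewrite !mxE. Qed.

Lemma b1_inj : injective b1.
Proof. by move=> c c' /(congr1 (fun x : bits 1 => x 0 0)); rewrite !b1K. Qed.

Lemma b1_01 : b1 0 != b1 1.
Proof. by apply/eqP => /b1_inj. Qed.

Section Qubit.
Variable g : op 1.
Hypothesis Hu : unitary g.

Lemma col_orth y y' : \sum_x (g x y)^* * g x y' = (y == y')%:R.
Proof. by have := unitary_adj Hu y y'; rewrite /opmul /adj /opid. Qed.

Lemma col_zero y : (forall x, g x y = 0) -> False.
Proof.
move=> H; have := col_orth y y; rewrite eqxx big1 => [/eqP|x _].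
  by rewrite eq_sym oner_eq0.
by rewrite H mulr0.
Qed.

Lemma col_prop r : (forall x, g x (b1 1) = r * g x (b1 0)) -> False.
Proof.
move=> H.
have := col_orth (b1 0) (b1 1); rewrite (negbTE b1_01).
under eq_bigr => x _ do rewrite H mulrCA.
rewrite -mulr_sumr col_orth eqxx mulr1 => r0.
by apply: (@col_zero (b1 1)) => x; rewrite H r0 mul0r.
Qed.

Lemma det_qubit (cx cz : algC) (e f c d : 'F_2) :
  (forall x y, g x (y + b1 1) * sgn2 (dotF2 (b1 0) y) =
     cx * sgn2 (dotF2 (b1 f) (x + b1 e)) * g (x + b1 e) y) ->
  (forall x y, g x (y + b1 0) * sgn2 (dotF2 (b1 1) y) =
     cz * sgn2 (dotF2 (b1 d) (x + b1 c)) * g (x + b1 c) y) ->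
  e * d + c * f = 1.
Proof.
rewrite b1_0 => HX HZ.
have HX' x y : g x (y + b1 1) = cx * sgn2 (dotF2 (b1 f) (x + b1 e)) * g (x + b1 e) y.
  by rewrite -HX dot0l mulr1.
have HZ' x y : g x y * sgn2 (y 0 0) = cz * sgn2 (dotF2 (b1 d) (x + b1 c)) * g (x + b1 c) y.
  by have := HZ x y; rewrite addr0 dot1E b1K mul1r.
have caseA : e = 0 -> f = 0 -> False.
  move=> e0 f0; apply: (@col_prop cx) => x.
  by rewrite -{1}[b1 1]add0r -b1_0 HX' e0 f0 b1_0 addr0 dot0l mulr1.
have caseB : c = 0 -> d = 0 -> False.
  move=> c0 d0.
  have H x y : g x y * sgn2 (y 0 0) = cz * g x y.
    by rewrite HZ' c0 d0 b1_0 addr0 dot0l mulr1.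
  case: (eqVneq cz 1) => [cz1|cz1].
    apply: (@col_zero (b1 1)) => x.
    have := H x (b1 1); rewrite b1K cz1 mul1r /sgn2 /= => /eqP.
    by rewrite mulrN1 eq_sym -addr_eq0 -mulr2n mulrn_eq0 /= => /eqP.
  apply: (@col_zero (b1 0)) => x.
  have := H x (b1 0); rewrite b1K /sgn2 /= mulr1 => /eqP.
  rewrite -subr_eq0 -{1}[g x (b1 0)]mul1r -mulrBl mulf_eq0 subr_eq0 eq_sym (negbTE cz1) /=.
  by move/eqP.
have caseC : e = c -> f = d -> False.
  move=> ec fd.
  have H0 x : g x (b1 0) = cz * sgn2 (dotF2 (b1 d) (x + b1 c)) * g (x + b1 c) (b1 0).
    by rewrite -HZ' b1K /sgn2 /= mulr1.
  have H1 x : g x (b1 1) = cx * sgn2 (dotF2 (b1 d) (x + b1 c)) * g (x + b1 c) (b1 0).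
    by rewrite -{1}[b1 1]add0r -b1_0 HX' ec fd.
  case: (eqVneq cz 0) => [cz0|cz0].
    by apply: (@col_zero (b1 0)) => x; rewrite H0 cz0 !mul0r.
  apply: (@col_prop (cx / cz)) => x.
  rewrite (H0 x) (H1 x); field; exact: cz0.
case: (F2_cases e) => He; case: (F2_cases f) => Hf;
case: (F2_cases c) => Hc; case: (F2_cases d) => Hd; rewrite He Hf Hc Hd;
  first [by apply/eqP | exfalso; first [by apply: caseA | by apply: caseB |
     by apply: caseC; rewrite ?He ?Hf ?Hc ?Hd]].
Qed.

End Qubit.

Definition mulv n (u : bits n) (d : 'I_n -> 'F_2) : bits n := \row_q (u 0 q * d q).

Lemma mulvE n (u : bits n) d : mulv u d = mulmxr (diag_mx (\row_q d q)) u.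
Proof. by apply/matrixP => i j; rewrite /= mul_mx_diag !mxE ord1. Qed.

Section Split.
Variables (n : nat) (A : {vspace bits n}) (d : 'I_n -> 'F_2).
Hypothesis HA : forall a, a \in A -> mulv a d \in A.

Let D1 := diag_mx (\row_q d q).
Let D2 := diag_mx (\row_q (1 - d q)).
Let P1 : 'End(bits n) := linfun (mulmxr D1).
Let P2 : 'End(bits n) := linfun (mulmxr D2).

Lemma P1E u : P1 u = mulv u d.
Proof. by rewrite /P1 lfunE mulvE. Qed.

Lemma P2E u : P2 u = u - mulv u d.
Proof.
rewrite /P2 lfunE /=; apply/matrixP => i j; rewrite mul_mx_diag !mxE.
by rewrite ord1 mulrBr mulr1.
Qed.

Lemma vsplit_of : vsplits A [set q | d q == 1].
Proof.
exists (P1 @: A)%VS, (P2 @: A)%VS; split.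
- apply/eqP; rewrite eqEsubv; apply/andP; split.
    rewrite subv_add; apply/andP; split; apply/subvP => v /memv_imgP [a aA ->].
      by rewrite P1E HA.
    by rewrite P2E memvB // HA.
  apply/subvP => a aA.
  have -> : a = P1 a + P2 a by rewrite P1E P2E addrC subrK.
  by apply: memv_add; apply: memv_img.
- apply/directv_addP; apply/eqP; rewrite -subv0; apply/subvP => v.
  rewrite memv_cap memv0 => /andP [/memv_imgP [a _ ->] /memv_imgP [a' _ E]].
  apply/eqP/matrixP => i j; rewrite ord1.
  rewrite P1E in E *; rewrite P2E in E.
  have := congr1 (fun x : bits n => x 0 j) E; rewrite !mxE.
  case: (F2_cases (d j)) => -> ; first by rewrite mulr0.
  by rewrite !mulr1 subrr.
- move=> v /memv_imgP [a _ ->] i; rewrite inE P1E mxE.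
  by case: (F2_cases (d i)) => -> //; rewrite mulr0.
- move=> v /memv_imgP [a _ ->] i; rewrite !inE negbK P2E !mxE => /eqP ->.
  by rewrite mulr1 subrr.
Qed.
End Split.

Lemma trivial_pattern n (A B : {vspace bits n}) (d : 'I_n -> 'F_2) :
  nonsplitting A B ->
  (forall a, a \in A -> mulv a d \in A) ->
  (forall b, b \in B -> mulv b d \in B) ->
  (forall q, d q = 0) \/ (forall q, d q = 1).
Proof.
move=> Hns HA HB.
case: (eqVneq [set q | d q == 1] set0) => [E0|N0].
  left => q; have : q \notin [set q | d q == 1] by rewrite E0 inE.
  by rewrite inE; case: (F2_cases (d q)) => ->.
case: (eqVneq [set q | d q == 1] setT) => [ET|NT].
  right => q; have : q \in [set q | d q == 1] by rewrite ET inE.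
  by rewrite inE => /eqP.
exfalso; apply: (Hns _ N0 NT); split; exact: vsplit_of.
Qed.

Lemma F2_inv (e f c d u v : 'F_2) :
  e * d + c * f = 1 ->
  u = d * (e * u + c * v) + c * (f * u + d * v) /\
  v = f * (e * u + c * v) + e * (f * u + d * v).
Proof.
case: (F2_cases e) => ->; case: (F2_cases f) => ->; case: (F2_cases c) => ->;
case: (F2_cases d) => ->; case: (F2_cases u) => ->; case: (F2_cases v) => ->;
move=> /eqP H1; move: H1; first [by [] | by move=> _; split; apply/eqP].
Qed.

Lemma F2_mul1 (c f : 'F_2) : c * f = 1 -> c = 1 /\ f = 1.
Proof.
by case: (F2_cases c) => ->; case: (F2_cases f) => ->; move/eqP; first [by [] | by move=> _; split].
Qed.

Section Sigma.
Variables (n : nat) (A B : {vspace bits n}) (e f c d : 'I_n -> 'F_2).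
Hypothesis Hdet : forall q, e q * d q + c q * f q = 1.
Hypothesis hAe : forall a, a \in A -> mulv a e \in A.
Hypothesis hAf : forall a, a \in A -> mulv a f \in B.
Hypothesis hBc : forall b, b \in B -> mulv b c \in A.
Hypothesis hBd : forall b, b \in B -> mulv b d \in B.

Definition sigma (p : bits n * bits n) : bits n * bits n :=
  (mulv p.1 e + mulv p.2 c, mulv p.1 f + mulv p.2 d).

Lemma sigma_inv (p : bits n * bits n) q : p.1 0 q = d q * (sigma p).1 0 q + c q * (sigma p).2 0 q /\
                      p.2 0 q = f q * (sigma p).1 0 q + e q * (sigma p).2 0 q.
Proof.
rewrite /sigma /= !mxE.
have [H1 H2] := F2_inv (p.1 0 q) (p.2 0 q) (Hdet q).
split; [rewrite {1}H1 | rewrite {1}H2]; congr (_ + _); congr (_ * _); ring.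
Qed.

Lemma sigma_inj : injective sigma.
Proof.
move=> p p' E; case: p p' E => [u v] [u' v'] E.
have Ei := fun q => (sigma_inv (u, v) q, sigma_inv (u', v') q).
congr (_, _); apply/matrixP => i q; rewrite ord1.
  by have [[-> _] [-> _]] := Ei q; rewrite E.
by have [[_ ->] [_ ->]] := Ei q; rewrite E.
Qed.

Lemma sigma_surj : (forall b, b \in B -> mulv b e \in B) /\ (forall a, a \in A -> mulv a d \in A).
Proof.
pose S := [set p : bits n * bits n | (p.1 \in A) && (p.2 \in B)].
have sub : sigma @: S \subset S.
  apply/subsetP => p' /imsetP [p]; rewrite inE => /andP [pA pB] ->.
  by rewrite inE /= !memvD ?hAe ?hBc ?hAf ?hBd.
have ES : sigma @: S = S.
  apply/eqP; rewrite eqEcard sub /= card_imset //; exact: sigma_inj.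
split.
  move=> b bB.
  have : (0, b) \in sigma @: S by rewrite ES inE /= mem0v.
  case/imsetP => p; rewrite inE => /andP [_ pB] E.
  suff -> : mulv b e = p.2 by [].
  apply/matrixP => i q; rewrite ord1 mxE.
  by have [_ ->] := sigma_inv p q; rewrite -E /= mxE mulr0 add0r mulrC.
move=> a aA.
have : (a, 0) \in sigma @: S by rewrite ES inE /= mem0v aA.
case/imsetP => p; rewrite inE => /andP [pA _] E.
suff -> : mulv a d = p.1 by [].
apply/matrixP => i q; rewrite ord1 mxE.
by have [-> _] := sigma_inv p q; rewrite -E /= mxE mulr0 addr0 mulrC.
Qed.
End Sigma.

Lemma LZ_B_inj n k (A B : {vspace bits n}) (LX LZ : 'M['F_2]_(k, n)) :
  logical_paulis A B LX LZ -> forall w : bits k, w *m LZ \in B -> w = 0.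
Proof.
case=> _ HXZ HXB _ w /HXB H.
have := congr1 trmx H; rewrite trmx_mul trmxK trmx0 => H'.
have E : LZ *m LX^T = 1%:M by rewrite -(trmxK LZ) -trmx_mul HXZ trmx1.
by rewrite -mulmxA E mulmx1 in H'.
Qed.

Lemma kernel_transport n (G : op n) (u v u' v' : bits n) (C : algC) :
  (forall x y, G x (y + u) * sgn2 (dotF2 v y) = C * sgn2 (dotF2 v' (x + u')) * G (x + u') y) ->
  forall psi x, opapp G (pa u v psi) x = C * pa u' v' (opapp G psi) x.
Proof.
move=> H psi0 x.
rewrite /opapp /pa -(sum_shift u).
transitivity (\sum_y (G x (y + u) * sgn2 (dotF2 v y)) * psi0 y).
  by apply: eq_bigr => y _; rewrite bits_addK mulrA.
under eq_bigr => y _ do rewrite H.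
by rewrite !mulr_sumr; apply: eq_bigr => y _; rewrite !mulrA.
Qed.

Section Embed.
Variables (k p : nat) (I : {set {ffun 'I_p -> 'I_k}}).
Implicit Types (tau : {ffun 'I_p -> 'I_k}) (d z : bits p) (j : 'I_k) (m : 'I_p).

Definition Pmx (tau : {ffun 'I_p -> 'I_k}) : 'M['F_2]_(p, k) := \matrix_(m, j) (tau m == j)%:R.
Definition tlift tau (d : bits p) : bits k := d *m Pmx tau.

Lemma liftE tau d j : tlift tau d 0 j = \sum_m d 0 m * (tau m == j)%:R.
Proof. by rewrite /tlift mxE; apply: eq_bigr => m _; rewrite mxE. Qed.

Lemma lift_out tau d j : j \notin codom tau -> tlift tau d 0 j = 0.
Proof.
move=> Hj; rewrite liftE big1 // => m _.
have -> : (tau m == j) = false.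
  by apply/negbTE; apply: contra Hj => /eqP <-; apply: codom_f.
by rewrite mulr0.
Qed.

Lemma lift_in tau d m : injective tau -> tlift tau d 0 (tau m) = d 0 m.
Proof.
move=> inj; rewrite liftE (bigD1 m) //= eqxx mulr1 big1 ?addr0 // => m' Hm.
by rewrite (inj_eq inj) (negbTE Hm) mulr0.
Qed.

Lemma restrD tau (x y : bits k) : restr tau (x + y) = restr tau x + restr tau y.
Proof. by apply/matrixP => i j; rewrite !mxE. Qed.

Lemma restr_lift_same tau d : injective tau -> restr tau (tlift tau d) = d.
Proof. by move=> inj; apply/matrixP => i m; rewrite ord1 mxE lift_in. Qed.

Lemma restr_lift_other tau tau' d :
  [disjoint codom tau & codom tau'] -> restr tau' (tlift tau d) = 0.
Proof.
move=> Hd; apply/matrixP => i m; rewrite [LHS]mxE [RHS]mxE lift_out //.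
by rewrite (disjointFl Hd) // codom_f.
Qed.

Lemma dot_lift tau z (s : bits k) : dotF2 (tlift tau z) s = dotF2 z (restr tau s).
Proof.
rewrite !dotE.
under eq_bigr => j _ do rewrite liftE mulr_suml.
rewrite exchange_big; apply: eq_bigr => m _; rewrite mxE.
rewrite (bigD1 (tau m)) //= eqxx mulr1 big1 ?addr0 // => j /negbTE.
by rewrite eq_sym => ->; rewrite mulr0 mul0r.
Qed.

Hypothesis HI : valid_tuples I.

Lemma embed_shift (U : op p) tau (z d z' d' : bits p) :
  tau \in I ->
  (forall r r', sgn2 (dotF2 z r) * U r' (r + d) = sgn2 (dotF2 z' (r' + d')) * U (r' + d') r) ->
  forall s s', sgn2 (dotF2 (tlift tau z) s) * embed I U s' (s + tlift tau d) =
     sgn2 (dotF2 (tlift tau z') (s' + tlift tau d')) * embed I U (s' + tlift tau d') s.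
Proof.
case: HI => _ Hinj Hdisj _ tI HU s s'.
have itau := Hinj _ tI.
have unc dd (x : bits k) j : [forall t in I, j \notin codom t] -> (x + tlift tau dd) 0 j = x 0 j.
  move=> /forall_inP /(_ tau tI) Hj; by rewrite mxE lift_out // addr0.
have oth dd (x : bits k) t : t \in I -> t != tau -> restr t (x + tlift tau dd) = restr t x.
  by move=> tI' tt; rewrite restrD restr_lift_other ?addr0 // Hdisj // eq_sym.
pose R := (\prod_(t in I | t != tau) U (restr t s') (restr t s)) *
          \prod_(j | [forall t in I, j \notin codom t]) ((s' 0 j == s 0 j)%:R : algC).
have L1 : embed I U s' (s + tlift tau d) = U (restr tau s') (restr tau s + d) * R.
  rewrite /embed (bigD1 tau tI) /= -mulrA /R; congr (_ * (_ * _)).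
  - by rewrite restrD restr_lift_same.
  - by apply: eq_bigr => t /andP [tI' tt]; rewrite oth.
  - by apply: eq_bigr => j Hj; rewrite unc.
have L2 : embed I U (s' + tlift tau d') s = U (restr tau s' + d') (restr tau s) * R.
  rewrite /embed (bigD1 tau tI) /= -mulrA /R; congr (_ * (_ * _)).
  - by rewrite restrD restr_lift_same.
  - by apply: eq_bigr => t /andP [tI' tt]; rewrite oth.
  - by apply: eq_bigr => j Hj; rewrite unc.
rewrite L1 L2 !dot_lift restrD restr_lift_same // !mulrA HU.
done.
Qed.

Lemma embed_unc (U : op p) j :
  (forall tau, tau \in I -> j \notin codom tau) ->
  (forall s s', embed I U s' (s + 'e_j) = embed I U (s' + 'e_j) s) /\
  (forall s s', sgn2 (dotF2 'e_j s) * embed I U s' s = sgn2 (dotF2 'e_j s') * embed I U s' s).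
Proof.
move=> Hj.
have Hr tau x : tau \in I -> restr tau (x + 'e_j) = restr tau x.
  move=> tI; apply/matrixP => i m; rewrite !mxE.
  have -> : (tau m == j) = false.
    by apply/negbTE; apply: contra (Hj _ tI) => /eqP <-; apply: codom_f.
  by rewrite andbF addr0.
have jin : [forall t in I, j \notin codom t] by apply/forall_inP.
have dotej (s : bits k) : dotF2 'e_j s = s 0 j.
  rewrite dotE (bigD1 j) //= !mxE !eqxx mul1r big1 ?addr0 // => i /negbTE ij.
  by rewrite !mxE ij andbF mul0r.
split=> s s'.
  rewrite /embed.
  congr (_ * _).
    by apply: eq_bigr => t tI; rewrite !Hr.
  rewrite !(bigD1 j jin) /=; congr (_ * _).
    rewrite !mxE !eqxx /=.
    case: (F2_cases (s' 0 j)) => ->; case: (F2_cases (s 0 j)) => ->; by [].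
  by apply: eq_bigr => i /andP [_ ij]; rewrite !mxE eqxx (negbTE ij) /= !addr0.
rewrite !dotej.
case: (eqVneq (s' 0 j) (s 0 j)) => [-> // | ne].
have -> : embed I U s' s = 0.
  rewrite /embed (bigD1 j jin) /= (negbTE ne) mul0r mulr0 //.
by rewrite !mulr0.
Qed.

End Embed.

Definition gate_ok p (U : op p) :=
  exists z d z' d' : bits p,
    (forall r r', sgn2 (dotF2 z r) * U r' (r + d) = sgn2 (dotF2 z' (r' + d')) * U (r' + d') r) /\
    ((z = 0 /\ d' + d != 0) \/ (d = 0 /\ z' + z != 0)).

Lemma e0_neq0 : ('e_0 : bits 1) != 0.
Proof. by apply/eqP => /matrixP /(_ 0 0); rewrite !mxE eqxx /=; apply/eqP. Qed.

Definition ph (x : bits 1) : algC := if x 0 0 == 0 then 1 else 'i.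

Lemma HP_E r' r : HPgate r' r = Hgate r' r * ph r.
Proof.
rewrite /HPgate /opmul /Pgate.
under eq_bigr => z _ do rewrite mulrA [Hgate r' z * _]mulrC -mulrA.
by rewrite sum_delta.
Qed.

Lemma PH_E r' r : PHgate r' r = ph r' * Hgate r' r.
Proof.
rewrite /PHgate /opmul /Pgate.
under eq_bigr => z _ do rewrite -mulrA.
by rewrite sum_delta'.
Qed.

Lemma e0E : ('e_0 : bits 1) 0 0 = 1.
Proof. by rewrite mxE eqxx. Qed.

Lemma H_id r r' : sgn2 (dotF2 'e_0 r) * Hgate r' (r + 0) =
   sgn2 (dotF2 0 (r' + 'e_0)) * Hgate (r' + 'e_0) r.
Proof.
rewrite /Hgate addr0 dot0l mul1r !dot1E e0E mul1r mulrA -sgn2D.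
congr (sgn2 _ * _); rewrite mxE e0E; ring.
Qed.

Lemma H_ok : gate_ok Hgate.
Proof.
exists 'e_0, 0, 0, 'e_0; split; first exact: H_id.
by right; split => //; rewrite add0r e0_neq0.
Qed.

Lemma HP_ok : gate_ok HPgate.
Proof.
exists 'e_0, 0, 0, 'e_0; split.
  move=> r r'; rewrite !HP_E.
  have Eph : ph (r + 0) = ph r by rewrite /ph !mxE addr0.
  rewrite Eph !mulrA; congr (_ * _).
  rewrite dot0l mul1r !dot1E !mxE eqxx /= addr0 mul1r -sgn2D; congr (sgn2 _ / _); ring.
by right; split => //; rewrite add0r e0_neq0.
Qed.

Lemma PH_ok : gate_ok PHgate.
Proof.
exists 0, 'e_0, 'e_0, 0; split.
  move=> r r'; rewrite !PH_E !addr0 dot0l mul1r /Hgate !dot1E e0E mul1r mxE e0E.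
  rewrite !mulrA [sgn2 _ * ph r']mulrC -!mulrA; congr (_ * _).
  rewrite mulrA -sgn2D; congr (sgn2 _ * _); ring.
by left; split => //; rewrite add0r e0_neq0.
Qed.

Lemma ord2_cases (j : 'I_2) : j = ord0 \/ j = ord_max.
Proof. by case: j => [[|[|//]]] Hj; [left|right]; apply: val_inj. Qed.

Lemma eq_shift n (x y d : bits n) : (x == y + d) = (x + d == y).
Proof.
apply/idP/idP => /eqP H; apply/eqP.
  by rewrite H bits_addK.
by rewrite -H bits_addK.
Qed.

Lemma CNOT_row (r : bits 2) :
  \row_(j < 2) (if j == ord0 then (r + 'e_ord0) 0 ord0 else (r + 'e_ord0) 0 ord_max + (r + 'e_ord0) 0 ord0) =
  (\row_(j < 2) (if j == ord0 then r 0 ord0 else r 0 ord_max + r 0 ord0)) + ('e_ord0 + 'e_ord_max).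
Proof.
apply/matrixP => i j; rewrite ord1 !mxE.
case: (ord2_cases j) => -> /=; ring.
Qed.

Lemma CNOT_ok : gate_ok CNOTgate.
Proof.
exists 0, 'e_ord0, 0, ('e_ord0 + 'e_ord_max); split.
  move=> r r'; rewrite !dot0l !sgn2_0 !mul1r /CNOTgate.
  rewrite CNOT_row; congr (_%:R).
  congr (nat_of_bool _); exact: eq_shift.
left; split => //.
rewrite addrC addrA bits_add_self add0r.
by apply/eqP => /matrixP /(_ 0 ord_max); rewrite !mxE eqxx /=; apply/eqP.
Qed.

Lemma row_id n (u : bits n) : \row_q u 0 q = u.
Proof. by apply/matrixP => i q; rewrite ord1 mxE. Qed.

Lemma row_zero n : \row_(q < n) (0 : 'F_2) = 0.
Proof. by apply/matrixP => i q; rewrite !mxE. Qed.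

Lemma mulv0 n (u : bits n) (dl : 'I_n -> 'F_2) : (forall q, dl q = 0) -> mulv u dl = 0.
Proof. by move=> H; apply/matrixP => i q; rewrite !mxE H mulr0. Qed.

Lemma mulv1 n (u : bits n) (dl : 'I_n -> 'F_2) : (forall q, dl q = 1) -> mulv u dl = u.
Proof. by move=> H; apply/matrixP => i q; rewrite !mxE H mulr1 ord1. Qed.

Lemma unit_neq0 k (j : 'I_k) : ('e_j : bits k) != 0.
Proof. by apply/eqP => /matrixP /(_ 0 j); rewrite !mxE !eqxx /=; apply/eqP. Qed.

Section Final.
Variables (n k : nat) (A B : {vspace bits n}) (LX LZ : 'M['F_2]_(k, n)).
Hypothesis orthAB : css_orth A B.
Hypothesis Hns : nonsplitting A B.
Hypothesis HL : logical_paulis A B LX LZ.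
Variables (p : nat) (U : op p) (I : {set {ffun 'I_p -> 'I_k}}) (g : 'I_n -> op 1).
Hypothesis HI : valid_tuples I.
Hypothesis Hcl : forall q, clifford1 (g q).
Hypothesis Hlog : logical_op A B (tens g).
Hypothesis Hact : has_logical_action A B LX LZ (tens g) (embed I U).
Hypothesis Hgate : gate_ok U.

Lemma final_contra : False.
Proof.
have HGu : unitary (tens g) by case: Hlog.
have HXd : forall q, exists t : algC * bits 1 * bits 1, forall x y,
    g q x (y + b1 1) * sgn2 (dotF2 (b1 0) y) =
    t.1.1 * sgn2 (dotF2 t.2 (x + t.1.2)) * g q (x + t.1.2) y.
  by move=> q; have [c [a' [b' H]]] := cliff_cov (Hcl q) (b1 1) (b1 0); exists (c, a', b').
have HZd : forall q, exists t : algC * bits 1 * bits 1, forall x y,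
    g q x (y + b1 0) * sgn2 (dotF2 (b1 1) y) =
    t.1.1 * sgn2 (dotF2 t.2 (x + t.1.2)) * g q (x + t.1.2) y.
  by move=> q; have [c [a' [b' H]]] := cliff_cov (Hcl q) (b1 0) (b1 1); exists (c, a', b').
have [tX HX] := fin_all_exists HXd.
have [tZ HZ] := fin_all_exists HZd.
pose e q := (tX q).1.2 0 0; pose f q := (tX q).2 0 0; pose cX q := (tX q).1.1.
pose c q := (tZ q).1.2 0 0; pose d q := (tZ q).2 0 0; pose cZ q := (tZ q).1.1.
have HX' q x y : g q x (y + b1 1) * sgn2 (dotF2 (b1 0) y) =
    cX q * sgn2 (dotF2 (b1 (f q)) (x + b1 (e q))) * g q (x + b1 (e q)) y.
  by rewrite /e /f -!b1E HX.
have HZ' q x y : g q x (y + b1 0) * sgn2 (dotF2 (b1 1) y) =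
    cZ q * sgn2 (dotF2 (b1 (d q)) (x + b1 (c q))) * g q (x + b1 (c q)) y.
  by rewrite /c /d -!b1E HZ.
have Hdet q : e q * d q + c q * f q = 1.
  by apply: (det_qubit (Hcl q).1 (HX' q) (HZ' q)).
have TX (u : bits n) : forall psi0 x, opapp (tens g) (pa u 0 psi0) x =
    (\prod_q (if u 0 q == 0 then 1 else cX q)) * pa (mulv u e) (mulv u f) (opapp (tens g) psi0) x.
  apply: kernel_transport => x y.
  have := @tens_cov n g (fun q => u 0 q) (fun _ => 0) (fun q => u 0 q * e q)
    (fun q => u 0 q * f q) (fun q => if u 0 q == 0 then 1 else cX q).
  rewrite row_id row_zero; apply.
  move=> q x' y'; case: (F2_cases (u 0 q)) => ->.
    by rewrite eqxx !mul0r b1_0 !addr0 !dot0l sgn2_0 !mul1r mulr1.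
  by rewrite (negbTE one_neq0_F2) !mul1r HX'.
have TZ (v : bits n) : forall psi0 x, opapp (tens g) (pa 0 v psi0) x =
    (\prod_q (if v 0 q == 0 then 1 else cZ q)) * pa (mulv v c) (mulv v d) (opapp (tens g) psi0) x.
  apply: kernel_transport => x y.
  have := @tens_cov n g (fun _ => 0) (fun q => v 0 q) (fun q => v 0 q * c q)
    (fun q => v 0 q * d q) (fun q => if v 0 q == 0 then 1 else cZ q).
  rewrite row_id row_zero; apply.
  move=> q x' y'; case: (F2_cases (v 0 q)) => ->.
    by rewrite eqxx !mul0r b1_0 !addr0 !dot0l sgn2_0 !mul1r mulr1.
  by rewrite (negbTE one_neq0_F2) !mul1r HZ'.
have stabA a : a \in A -> mulv a e \in A /\ mulv a f \in B.
  move=> aA.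
  have := combine orthAB HL HGu Hact (u'' := 0) (v'' := 0) (u' := mulv a e) (v' := mulv a f)
    (C := \prod_q (if a 0 q == 0 then 1 else cX q)).
  rewrite !add0r; apply=> s x.
  rewrite pa00 -TX /opapp; apply: eq_bigr => y _; congr (_ * _).
  have := (psi_code orthAB HL s).1 a aA y; rewrite opapp_X => <-.
  by rewrite /pa dot0l sgn2_0 mul1r.
have stabB b : b \in B -> mulv b c \in A /\ mulv b d \in B.
  move=> bB.
  have := combine orthAB HL HGu Hact (u'' := 0) (v'' := 0) (u' := mulv b c) (v' := mulv b d)
    (C := \prod_q (if b 0 q == 0 then 1 else cZ q)).
  rewrite !add0r; apply=> s x.
  rewrite pa00 -TZ /opapp; apply: eq_bigr => y _; congr (_ * _).
  have := (psi_code orthAB HL s).2 b bB y; rewrite opapp_Z => <-.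
  by rewrite /pa addr0.
have [hBe hAd] := sigma_surj Hdet (fun a aA => (stabA a aA).1) (fun a aA => (stabA a aA).2)
   (fun b bB => (stabB b bB).1) (fun b bB => (stabB b bB).2).
have pd := trivial_pattern Hns hAd (fun b bB => (stabB b bB).2).
have pe := trivial_pattern Hns (fun a aA => (stabA a aA).1) hBe.
have HI' := HI; case: HI' => HIne Hinj Hdisj [j Hj].
have [Wa Wb] := embed_unc U Hj.
case: pd => [d0 | d1].
  (* d = 0, Z_j -> Z_j *)
  pose v : bits n := ('e_j : bits k) *m LZ.
  have key : forall s x, (\prod_q (if v 0 q == 0 then 1 else cZ q)) *
      pa (mulv v c) (mulv v d) (opapp (tens g) (psi A LX s)) x =
      pa 0 v (opapp (tens g) (psi A LX s)) x.
    move=> s x; rewrite -TZ.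
    have := transport_W orthAB HL Hact (dx := 0) (dz := 'e_j) (dx' := 0) (dz' := 'e_j).
    rewrite !mul0mx; apply.
    by move=> s0 s'; rewrite !addr0 Wb.
  have [_ HB] := combine orthAB HL HGu Hact key.
  rewrite mulv0 // addr0 in HB.
  by have := LZ_B_inj HL HB; apply/eqP; exact: unit_neq0.
case: pe => [e0 | e1].
  (* e = 0, X_j -> X_j *)
  pose u : bits n := ('e_j : bits k) *m LX.
  have key : forall s x, (\prod_q (if u 0 q == 0 then 1 else cX q)) *
      pa (mulv u e) (mulv u f) (opapp (tens g) (psi A LX s)) x =
      pa u 0 (opapp (tens g) (psi A LX s)) x.
    move=> s x; rewrite -TX.
    have := transport_W orthAB HL Hact (dx := 'e_j) (dz := 0) (dx' := 'e_j) (dz' := 0).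
    rewrite !mul0mx; apply.
    by move=> s0 s'; rewrite !dot0l Wa.
  have [HA _] := combine orthAB HL HGu Hact key.
  rewrite mulv0 // addr0 in HA.
  by have := LX_A_inj HL HA; apply/eqP; exact: unit_neq0.
(* e = d = 1 : gate-specific *)
have [tau tI] : exists tau, tau \in I by apply/set0Pn.
have itau := Hinj _ tI.
case: Hgate => [z [dd [z' [dd' [HU Hcase]]]]].
have HW := embed_shift HI tI HU.
have lift0 : tlift tau 0 = 0 by rewrite /tlift mul0mx.
have liftD a b : tlift tau (a + b) = tlift tau a + tlift tau b by rewrite /tlift mulmxDl.
have lift_neq0 a : a != 0 -> tlift tau a != 0.
  move=> an0; apply: contra an0 => /eqP la.
  by rewrite -(restr_lift_same a itau) la; apply/eqP/matrixP => i m; rewrite !mxE.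
case: Hcase => [[z0 dne] | [d0 zne]].
  pose u := tlift tau dd *m LX.
  have key : forall s x, (\prod_q (if u 0 q == 0 then 1 else cX q)) *
      pa (mulv u e) (mulv u f) (opapp (tens g) (psi A LX s)) x =
      pa (tlift tau dd' *m LX) (tlift tau z' *m LZ) (opapp (tens g) (psi A LX s)) x.
    move=> s x; rewrite -TX.
    have := transport_W orthAB HL Hact HW s x.
    by rewrite z0 lift0 mul0mx.
  have [HA _] := combine orthAB HL HGu Hact key.
  rewrite mulv1 // -mulmxDl -liftD in HA.
  by have := LX_A_inj HL HA; apply/eqP; exact: lift_neq0.
pose v := tlift tau z *m LZ.
have key : forall s x, (\prod_q (if v 0 q == 0 then 1 else cZ q)) *
    pa (mulv v c) (mulv v d) (opapp (tens g) (psi A LX s)) x =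
    pa (tlift tau dd' *m LX) (tlift tau z' *m LZ) (opapp (tens g) (psi A LX s)) x.
  move=> s x; rewrite -TZ.
  have := transport_W orthAB HL Hact HW s x.
  by rewrite d0 lift0 mul0mx.
have [_ HB] := combine orthAB HL HGu Hact key.
rewrite mulv1 // -mulmxDl -liftD in HB.
by have := LZ_B_inj HL HB; apply/eqP; exact: lift_neq0.
Qed.

End Final.

End ProofDev.

Theorem proposition9 (n : nat) (A B : {vspace 'rV['F_2]_n}) :
  css_orth A B -> nonsplitting A B ->
  forall (k : nat) (LX LZ : 'M['F_2]_(k, n)), logical_paulis A B LX LZ ->
  [/\ ~ partially_addressable A B LX LZ Hgate,
      ~ partially_addressable A B LX LZ PHgate,
      ~ partially_addressable A B LX LZ HPgate &
      ~ partially_addressable A B LX LZ CNOTgate].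
Proof.
move=> orthAB Hns k LX LZ HL.
split; move=> [I [HI [g [Hcl Hlog Hact]]]];
  apply: (ProofDev.final_contra orthAB Hns HL HI Hcl Hlog Hact).
- exact: ProofDev.H_ok.
- exact: ProofDev.PH_ok.
- exact: ProofDev.HP_ok.
- exact: ProofDev.CNOT_ok.
Qed.
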